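(* Let $q_3\in\{1,2,4\}$, let $p_4>q_4>0$ be coprime with $\gcd(p_4,30)=1$, and let $T=\{(2,1),(3,2),(5,q_3),(p_4,q_4)\}$ satisfy $0<K^2(T)\le 3e_{\mathrm{orb}}(T)$. Write $p_4/(p_4-q_4)=[n_1,\dots,n_\ell]$. Then $\sum_{j=1}^\ell n_j-3\ell\in\{-2,-3\}$ if $q_3=1$, $\in\{-4,-5\}$ if $q_3=2$, and $\in\{-7,-8\}$ if $q_3=4$.
   Context: Hirzebruch–Jung continued fraction: $[a_1,\dots,a_\ell]=a_1-1/(a_2-1/(\cdots-1/a_\ell))$, $a_i\ge 2$. For a type $T=\{(p_i,q_i)\}_{i=1}^4$ write $p_i/(p_i-q_i)=[n_{i,1},\dots,n_{i,\ell_i}]$, $L=\sum\ell_i$, $q_i^{-1}$ the inverse of $q_i$ mod $p_i$ in $(0,p_i)$; $K^2(T)=9-3L+\sum_{i,j}n_{i,j}-\sum_i\frac{q_i+q_i^{-1}-2}{p_i}$ and $e_{\mathrm{orb}}(T)=3-\sum_i(1-1/p_i)$ (so here $3e_{\mathrm{orb}}(T)=\frac1{10}+\frac3{p_4}$). *)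

(* Defs.v *)
From mathcomp Require Import all_boot all_order all_algebra.
Set Implicit Arguments. Unset Strict Implicit. Unset Printing Implicit Defensive.
Import Order.TTheory GRing.Theory Num.Theory.

(* Hirzebruch-Jung continued fraction expansion of a/b (a > b > 0):
   a/b = [n_1,...,n_l] = n_1 - 1/(n_2 - 1/(... - 1/n_l)), n_i >= 2.
   n_1 = ceil(a/b); if b | a stop, else continue with b/(n_1 b - a).
   The fuel argument is large enough (a) since the denominators strictly decrease. *)
Fixpoint hj_aux (fuel a b : nat) : seq nat :=
  match fuel with
  | 0 => [::]
  | fuel'.+1 =>
      let n := (a + b - 1) %/ b in
      let r := n * b - a in
      if (b == 0) || (r == 0) then [:: n] else n :: hj_aux fuel' b r
  end.

Definition hj (a b : nat) : seq nat := hj_aux a.+1 a b.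

Definition hjT (pq : nat * nat) : seq nat := hj pq.1 (pq.1 - pq.2).

Definition qinv (p q : nat) : nat :=
  nth 0 [seq k <- iota 1 (p.-1) | q * k %% p == 1 %% p] 0.

Definition Ltot (T : seq (nat * nat)) : nat := \sum_(pq <- T) size (hjT pq).

Definition sumN (T : seq (nat * nat)) : nat := \sum_(pq <- T) \sum_(n <- hjT pq) n.

Local Open Scope ring_scope.

Definition K2 (T : seq (nat * nat)) : rat :=
  9 - 3 * (Ltot T)%:R + (sumN T)%:R
  - \sum_(pq <- T) ((pq.2 + qinv pq.1 pq.2)%:R - 2) / (pq.1)%:R.

Definition eorb (T : seq (nat * nat)) : rat :=
  3 - \sum_(pq <- T) (1 - ((pq.1)%:R)^-1).

(* Main.v *)
Require Import Defs.
From mathcomp Require Import all_boot all_order all_algebra.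
From mathcomp Require Import ring lra zify.
Import Order.TTheory GRing.Theory Num.Theory.
Local Open Scope ring_scope.
Lemma qinv_le p q : (qinv p q <= p.-1)%N.
Proof.
rewrite /qinv.
set s := [seq _ <- _ | _].
have : all (fun k => k <= p.-1)%N s.
  rewrite all_filter; apply/allP => k; rewrite mem_iota => /andP[h1 h2]; apply/implyP => _; lia.
case: (ltnP 0 (size s)) => hs.
  by move/allP; apply; apply: mem_nth.
by rewrite nth_default.
Qed.

Lemma finish (a l : nat) (lo hi : rat) (L H : int) :
  lo = L%:~R -> hi = H%:~R -> lo < a%:R - 3 * l%:R -> a%:R - 3 * l%:R < hi ->
  (L < a%:Z - 3 * l%:Z < H)%R.
Proof.
have hS : (a%:Z - 3 * l%:Z)%:~R = a%:R - 3 * l%:R :> rat by rewrite rmorphB /= rmorphM.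
by move=> -> ->; rewrite -hS !ltr_int => -> ->.
Qed.

Theorem mainTheorem13 (q3 p4 q4 : nat) :
  q3 \in [:: 1%N; 2%N; 4%N] ->
  (0 < q4)%N -> (q4 < p4)%N -> coprime p4 q4 -> coprime p4 30 ->
  let T := [:: (2%N, 1%N); (3%N, 2%N); (5%N, q3); (p4, q4)] in
  0 < K2 T -> K2 T <= 3 * eorb T ->
  let s : int := (\sum_(n <- hj p4 (p4 - q4)) n)%:Z - 3 * (size (hj p4 (p4 - q4)))%:Z in
  (q3 = 1%N -> s \in [:: -2; -3]) /\
  (q3 = 2%N -> s \in [:: -4; -5]) /\
  (q3 = 4%N -> s \in [:: -7; -8]).
Proof.
move=> hq3 hq40 hqp hcop hc30 T.
have hp7 : (7 <= p4)%N.
  move: hc30 hqp hq40; clear; case: p4 => [|[|[|[|[|[|[|p]]]]]]] //; lia.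
have hqi := qinv_le p4 q4.
set a := (\sum_(n <- hj p4 (p4 - q4)) n)%N.
set l := size (hj p4 (p4 - q4)).
set qi := qinv p4 q4.
set P : rat := p4%:R.
have hP : 7 <= P by rewrite /P (ler_nat rat 7 p4).
have hP0 : P != 0 by rewrite /P pnatr_eq0; lia.
set z : rat := P^-1.
have hz : 0 < z by rewrite /z invr_gt0; lra.
have hPz : P * z = 1 by rewrite /z mulfV.
have hz7 : z <= 1/7 by nra.
set y : rat := (q4%:R + qi%:R - 2) * z.
have hq4r : 1 <= q4%:R :> rat by rewrite (ler_nat rat 1 q4).
have hq4r' : q4%:R + 1 <= P :> rat.
  have : (q4 + 1 <= p4)%N by lia.
  by rewrite -(ler_nat rat) natrD.
have hqi' : qi%:R + 1 <= P :> rat.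
  have : (qi + 1 <= p4)%N by rewrite /qi; lia.
  by rewrite -(ler_nat rat) natrD.
have hqi0 : 0 <= qi%:R :> rat by [].
have hy1 : -1/7 <= y by rewrite /y; nra.
have hy2 : y <= 2 - 4 * z by rewrite /y; nra.
rewrite /K2 /eorb /Ltot /sumN /T !big_cons !big_nil.
have e1 : hjT (2%N,1%N) = [::2%N] by [].
have e2 : hjT (3%N,2%N) = [::3%N] by [].
have e3 : qinv 2 1 = 1%N by [].
have e4 : qinv 3 2 = 2%N by [].
rewrite e1 e2; cbn [fst snd]; rewrite e3 e4.
rewrite [hjT (p4,q4)]/hjT; cbn [fst snd]; rewrite -/a -/l -/qi.
have hS : forall S : int, S = (a%:Z - 3 * l%:Z) -> S%:~R = a%:R - 3 * l%:R :> rat.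
  by move=> S ->; rewrite rmorphB /= rmorphM /=.
have e7 : ((3 + (3 - 2) - 1) %/ (3 - 2))%N = 3%N by [].
have e8 : ((2 + (2 - 1) - 1) %/ (2 - 1))%N = 2%N by [].
have e9 : size [::2%N] = 1%N by [].
have e10 : size [::3%N] = 1%N by [].
rewrite e9 e10.
have e11 : 2 + 3 = 5 :> rat by lra.
have ey : ((q4 + qi)%:R - 2) / p4%:R = y by rewrite /y natrD.
rewrite ey -/P -/z.
move=> hK1 hK2.
split; [move=> e| split => e]; subst q3; move: hK1 hK2.
- have e5 : hjT (5%N,1%N) = [::2;2;2;2]%N by [].
  have e6 : qinv 5 1 = 1%N by [].
  rewrite e5 e6 !big_cons !big_nil.
  rewrite !natrD ?addr0 ?e7 ?e8 ?e11 => hK1 hK2.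
  have hA : 0 < 10/3 + (a%:R - 3 * l%:R) - y by lra.
  have hB : 10/3 + (a%:R - 3 * l%:R) - y <= 1/10 + 3 * z by lra.
  have /andP[h1 h2] : (-4 < a%:Z - 3 * l%:Z < -1)%R.
    by apply: (finish _ _ (-4) (-1) (-4) (-1)); [by []|by []|lra|lra].
  clear -h1 h2; rewrite !inE; lia.
- have e5 : hjT (5%N,2%N) = [::2;3]%N by [].
  have e6 : qinv 5 2 = 3%N by [].
  rewrite e5 e6 !big_cons !big_nil.
  rewrite !natrD ?addr0 ?e7 ?e8 ?e11 => hK1 hK2.
  have hA : 0 < 86/15 + (a%:R - 3 * l%:R) - y by lra.
  have hB : 86/15 + (a%:R - 3 * l%:R) - y <= 1/10 + 3 * z by lra.
  have /andP[h1 h2] : (-6 < a%:Z - 3 * l%:Z < -3)%R.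
    by apply: (finish _ _ (-6) (-3) (-6) (-3)); [by []|by []|lra|lra].
  clear -h1 h2; rewrite !inE; lia.
- have e5 : hjT (5%N,4%N) = [::5]%N by [].
  have e6 : qinv 5 4 = 4%N by [].
  have e12 : size [::5%N] = 1%N by [].
  rewrite e5 e6 e12 !big_cons !big_nil.
  rewrite !natrD ?addr0 ?e7 ?e8 ?e11 => hK1 hK2.
  have hA : 0 < 122/15 + (a%:R - 3 * l%:R) - y by lra.
  have hB : 122/15 + (a%:R - 3 * l%:R) - y <= 1/10 + 3 * z by lra.
  have /andP[h1 h2] : (-9 < a%:Z - 3 * l%:Z < -6)%R.
    by apply: (finish _ _ (-9) (-6) (-9) (-6)); [by []|by []|lra|lra].
  clear -h1 h2; rewrite !inE; lia.
Qed.
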